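(* For every integer $n\ge2$, the $n$-th Bernoulli number satisfies $B_n=(-1)^n\,q_{n-1}(1)\,n!$.
   Context: The Bernoulli numbers $B_n$ are defined by $\frac{z}{e^z-1}=\sum_{n\ge0}\frac{B_n}{n!}z^n$ for $|z|<2\pi$. The polynomials $p_j,q_j$ ($j\ge1$) are defined recursively by $p_1(x)=\frac{x-x^2}{2}$, $q_j(x)=\int_0^xp_j(t)\,dt$, and $p_{j+1}(x)=q_j(x)-x\,q_j(1)$. *)

(* Defs.v *)
From Stdlib Require Import Reals Arith Factorial.
From Coquelicot Require Import Coquelicot.
Open Scope R_scope.

(* The paper's polynomials, as real functions.
   p j = p_j for j >= 1 (p 0 is an unused dummy value).
   p_1(x) = (x - x^2)/2,  q_j(x) = int_0^x p_j,  p_{j+1}(x) = q_j(x) - x q_j(1). *)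
Fixpoint p (j : nat) : R -> R :=
  match j with
  | O => fun _ => 0
  | S O => fun x => (x - x ^ 2) / 2
  | S j' => fun x => RInt (p j') 0 x - x * RInt (p j') 0 1
  end.

Definition q (j : nat) (x : R) : R := RInt (p j) 0 x.

Definition is_bernoulli_seq (B : nat -> R) : Prop :=
  forall z : R, 0 < Rabs z < 2 * PI ->
    is_series (fun n => B n / INR (fact n) * z ^ n) (z / (exp z - 1)).

(* Main.v *)
Require Import Defs.
From Stdlib Require Import Reals Arith Factorial.
From Coquelicot Require Import Coquelicot.
From Stdlib Require Import Lra Lia.
Open Scope R_scope.

Lemma rad_of (c : nat -> R) (x : R) :
  ex_series (fun n => c n * x ^ n) -> Rbar_le (Rabs x) (CV_radius c).
Proof.
  intros H. apply Rbar_not_lt_le. intros Hlt.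
  apply (CV_disk_outside c x Hlt). now apply ex_series_lim_0.
Qed.

Lemma is_series_zero : is_series (fun _ : nat => 0) 0.
Proof.
  apply (is_series_ext (fun n => scal 0 (/ INR (fact n) * 1 ^ n))).
  - intros n. unfold scal; simpl; unfold mult; simpl. ring.
  - assert (H := is_series_scal (K:=R_AbsRing) 0 _ _ (proj1 (is_pseries_R _ _ _) (is_exp_Reals 1))).
    replace (scal _ (exp 1)) with 0 in H by (unfold scal; simpl; unfold mult; simpl; ring).
    exact H.
Qed.

Lemma is_series_ind1 (z : R) :
  is_series (fun n => (if Nat.eqb n 1 then 1 else 0) * z ^ n) z.
Proof.
  apply is_series_decr_1. simpl. apply is_series_decr_1. simpl.
  apply (is_series_ext (fun _ => 0)). { intros n. simpl. ring. }
  match goal with |- is_series _ ?l => replace l with 0 end.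
  - apply is_series_zero.
  - unfold plus, opp; simpl. ring.
Qed.

Definition HypU (c : nat -> R) :=
  forall z, 0 < z < 2 -> is_series (fun n => c n * z ^ n) 0.

Lemma uniq0 (c : nat -> R) : HypU c -> c O = 0.
Proof.
  intros Hc.
  assert (Hr : Rbar_lt 0 (CV_radius c)).
  { apply Rbar_lt_le_trans with (Rabs (3/2)).
    - simpl. rewrite Rabs_pos_eq; lra.
    - apply rad_of. eexists. apply Hc. lra. }
  assert (Hcont := PSeries_continuity c 0).
  rewrite Rabs_R0 in Hcont. specialize (Hcont Hr).
  rewrite continuity_pt_locally in Hcont.
  assert (H0 : PSeries c 0 = c O).
  { apply is_pseries_unique. apply is_pseries_R.
    apply is_series_decr_1. apply (is_series_ext (fun _ => 0)).
    - intros k. simpl. ring.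
    - match goal with |- is_series _ ?l => replace l with 0 end.
      apply is_series_zero. unfold plus, opp; simpl; ring. }
  rewrite <- H0.
  apply Rabs_eq_0. apply Rle_antisym; [|apply Rabs_pos].
  apply le_epsilon. intros eps Heps.
  destruct (Hcont (mkposreal eps Heps)) as [d Hd].
  set (z := Rmin (d/2) 1).
  assert (Hdp := cond_pos d).
  assert (Hz0 : 0 < z). { unfold z. apply Rmin_pos; lra. }
  assert (Hz1 : z <= 1) by apply Rmin_r.
  assert (Hzd : z <= d/2) by apply Rmin_l.
  assert (Hpz : PSeries c z = 0).
  { apply is_pseries_unique. apply is_pseries_R. apply Hc. lra. }
  assert (Hb : ball 0 d z).
  { unfold ball; simpl; unfold AbsRing_ball, abs, minus, plus, opp; simpl.
    rewrite Ropp_0, Rplus_0_r, Rabs_pos_eq; lra. }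
  specialize (Hd z Hb). simpl in Hd. rewrite Hpz in Hd.
  rewrite Rminus_0_l, Rabs_Ropp in Hd. lra.
Qed.

Lemma uniq (n : nat) : forall c : nat -> R, HypU c -> c n = 0.
Proof.
  induction n as [|n IH]; intros c Hc.
  - now apply uniq0.
  - change (c (S n)) with (PS_decr_1 c n). apply IH.
    intros z Hz.
    assert (Hc0 := uniq0 c Hc).
    assert (H1 : is_series (fun k => c (S k) * z ^ (S k)) 0).
    { apply (is_series_incr_1 (fun k => c k * z ^ k)).
      match goal with |- is_series _ ?l => replace l with 0 end.
      apply Hc; lra. unfold plus; simpl. rewrite Hc0. ring. }
    assert (H2 := is_series_scal (K:=R_AbsRing) (/ z) _ _ H1).
    match type of H2 with is_series _ ?l => replace l with 0 in H2 end.
    2:{ unfold scal; simpl; unfold mult; simpl; ring. }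
    revert H2. apply is_series_ext. intros k.
    unfold scal, PS_decr_1; simpl; unfold mult; simpl. field. lra.
Qed.

Lemma sum_rev (f : nat -> R) (n : nat) :
  sum_f_R0 f n = sum_f_R0 (fun i => f (n - i)%nat) n.
Proof.
  revert f. induction n as [|n IH]; intros f.
  - reflexivity.
  - rewrite (tech5 (fun i => f (S n - i)%nat) n). rewrite (decomp_sum f (S n)) by lia. simpl pred.
    rewrite (IH (fun k => f (S k))).
    replace ((S n - S n)%nat) with 0%nat by lia.
    rewrite Rplus_comm. f_equal. apply sum_eq. intros i Hi.
    f_equal. lia.
Qed.

Lemma fact_S_R n : INR (fact (S n)) = INR (S n) * INR (fact n).
Proof. rewrite fact_simpl, mult_INR. reflexivity. Qed.

Lemma mono_der (m : nat) (t : R) :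
  is_derive (fun t => t ^ S m / INR (fact (S m))) t (t ^ m / INR (fact m)).
Proof.
  assert (D := is_derive_pow (fun t => t) (S m) t 1 (is_derive_id t)).
  assert (D2 := is_derive_scal _ t (/ INR (fact (S m))) _ D).
  simpl in D2.
  apply (is_derive_ext (K:=R_AbsRing) (V:=R_NormedModule) (fun t0 => / INR (fact (S m)) * t0 ^ S m)).
  { intros u. cbv beta. unfold Rdiv. apply Rmult_comm. }
  match goal with |- is_derive _ _ ?l => replace l with (/ INR (fact (S m)) * (INR (S m) * 1 * t ^ m)) end.
  - exact D2.
  - rewrite fact_S_R. assert (Hf := INR_fact_neq_0 m). assert (HS := not_0_INR (S m) ltac:(lia)).
    field. auto.
Qed.

Lemma mono_RInt (i : nat) (x : R) :
  is_RInt (fun t => t ^ S i / INR (fact (S i))) 0 x (x ^ S (S i) / INR (fact (S (S i)))).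
Proof.
  assert (H := is_RInt_derive (fun t => t ^ S (S i) / INR (fact (S (S i))))
     (fun t => t ^ S i / INR (fact (S i))) 0 x).
  cbv beta in H.
  match type of H with _ -> _ -> is_RInt _ _ _ ?l => replace l with (x ^ S (S i) / INR (fact (S (S i)))) in H end.
  - apply H.
    + intros t _. apply mono_der.
    + intros t _. apply (ex_derive_continuous (K:=R_AbsRing) (V:=R_NormedModule)). eexists. apply mono_der.
  - unfold minus, plus, opp; simpl. unfold Rdiv. rewrite !Rmult_0_l, Ropp_0, Rplus_0_r. reflexivity.
Qed.

Lemma poly_RInt (c : nat -> R) (N : nat) (x : R) :
  is_RInt (fun t => sum_f_R0 (fun i => c i * (t ^ S i / INR (fact (S i)))) N) 0 x
    (sum_f_R0 (fun i => c i * (x ^ S (S i) / INR (fact (S (S i))))) N).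
Proof.
  induction N as [|N IH].
  - simpl sum_f_R0.
    assert (H := is_RInt_scal _ _ _ (c O) _ (mono_RInt 0 x)).
    exact H.
  - assert (H := is_RInt_plus _ _ _ _ _ _ IH (is_RInt_scal _ _ _ (c (S N)) _ (mono_RInt (S N) x))).
    exact H.
Qed.

Section Poly.
Variable a : nat -> R.
Hypothesis a0 : a O = 1.
Hypothesis a1 : a 1%nat = -1/2.
Hypothesis arec : forall j, sum_f_R0 (fun k => a k * / INR (fact (S (S j) - k))) j + a (S j) = 0.

Definition F (j : nat) (x : R) := sum_f_R0 (fun i => - a (j - i) * (x ^ S i / INR (fact (S i)))) j.
Definition G (j : nat) (x : R) := sum_f_R0 (fun i => - a (j - i) * (x ^ S (S i) / INR (fact (S (S i))))) j.

Lemma RInt_F j x : (forall t, p j t = F j t) -> RInt (p j) 0 x = G j x.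
Proof.
  intros H. rewrite (RInt_ext _ (F j)) by (intros; apply H).
  apply is_RInt_unique. apply poly_RInt.
Qed.

Lemma G1 j : G j 1 = a (S j).
Proof.
  unfold G. specialize (arec j).
  rewrite (sum_rev (fun k => a k * / INR (fact (S (S j) - k)))) in arec.
  assert (E : sum_f_R0 (fun i => - a (j - i) * (1 ^ S (S i) / INR (fact (S (S i))))) j
    = - sum_f_R0 (fun i => a (j - i)%nat * / INR (fact (S (S j) - (j - i)))) j).
  { replace (- sum_f_R0 _ j) with (-1 * sum_f_R0 (fun i => a (j - i)%nat * / INR (fact (S (S j) - (j - i)))) j) by ring.
    rewrite scal_sum. apply sum_eq. intros i Hi.
    replace (S (S j) - (j - i))%nat with (S (S i)) by lia. rewrite pow1. unfold Rdiv. ring. }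
  rewrite E. lra.
Qed.

Lemma pF (j : nat) : forall x, p (S j) x = F (S j) x.
Proof.
  induction j as [|j IH]; intros x.
  - unfold F. simpl. rewrite a0, a1. field.
  - change (p (S (S j)) x) with (RInt (p (S j)) 0 x - x * RInt (p (S j)) 0 1).
    rewrite !(RInt_F (S j)) by exact IH. rewrite G1.
    unfold F, G. rewrite (decomp_sum _ (S (S j))) by lia. simpl pred.
    replace (S (S j) - 0)%nat with (S (S j)) by lia.
    assert (E : sum_f_R0 (fun i => - a (S (S j) - S i) * (x ^ S (S i) / INR (fact (S (S i))))) (S j)
       = sum_f_R0 (fun i => - a (S j - i) * (x ^ S (S i) / INR (fact (S (S i))))) (S j)).
    { apply sum_eq. intros i Hi. replace (S (S j) - S i)%nat with (S j - i)%nat by lia. reflexivity. }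
    rewrite E. simpl (fact 1). simpl (INR 1). simpl (x ^ 1). field.
Qed.

Lemma q1 (j : nat) : q (S j) 1 = a (S (S j)).
Proof. unfold q. rewrite (RInt_F (S j)) by apply pF. apply G1. Qed.
End Poly.

Definition ind (n : nat) : R := if Nat.eqb n 1 then 1 else 0.

Section Bern.
Variable B : nat -> R.
Hypothesis HB : is_bernoulli_seq B.
Definition a (n : nat) := B n / INR (fact n).

Lemma PI_gt_2 : 2 < PI.
Proof. assert (H := PI2_1). lra. Qed.

Lemma f_ser (z : R) : 0 < Rabs z < 4 ->
  is_series (fun n => a n * z ^ n) (z / (exp z - 1)).
Proof. intros Hz. apply HB. assert (H := PI_gt_2). lra. Qed.

Lemma rad_a : Rbar_le 2 (CV_radius a).
Proof.
  replace 2 with (Rabs 2) by (rewrite Rabs_pos_eq; lra).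
  apply rad_of. eexists. apply f_ser. rewrite Rabs_pos_eq; lra.
Qed.

Lemma rad_e : Rbar_le 3 (CV_radius (fun n => / INR (fact n))).
Proof.
  replace 3 with (Rabs 3) by (rewrite Rabs_pos_eq; lra).
  apply rad_of. eexists. apply is_pseries_R. apply is_exp_Reals.
Qed.

Lemma exp_gt1 z : 0 < z -> exp z - 1 > 0.
Proof. intros. assert (H1 := exp_ineq1 z). lra. Qed.

Lemma odd_hyp : HypU (fun n => a n * (-1) ^ n - a n - ind n).
Proof.
  intros z Hz.
  assert (H1 := f_ser (- z)). rewrite Rabs_Ropp, Rabs_pos_eq in H1 by lra.
  specialize (H1 ltac:(lra)).
  assert (H2 := f_ser z). rewrite Rabs_pos_eq in H2 by lra.
  specialize (H2 ltac:(lra)).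
  assert (H3 := is_series_ind1 z).
  assert (H := is_series_minus _ _ _ _ (is_series_minus _ _ _ _ H1 H2) H3).
  match type of H with is_series _ ?l => replace l with 0 in H end.
  - revert H. apply is_series_ext. intros n. unfold plus, opp, ind; simpl.
    replace (- z) with ((-1) * z) by ring. rewrite Rpow_mult_distr. ring.
  - unfold plus, opp; simpl. rewrite exp_Ropp.
    assert (He := exp_gt1 z ltac:(lra)). assert (exp z > 0) by apply exp_pos.
    assert (Hi : / exp z - 1 <> 0).
    { intros Hc. assert (Hq : / exp z * exp z = 1 * exp z) by (replace (/ exp z) with 1 by lra; ring).
      rewrite Rinv_l in Hq by lra. lra. }
    field. split; lra.
Qed.

Lemma rec_hyp : HypU (fun n => sum_f_R0 (fun k => a k * / INR (fact (n - k))) n - a n - ind n).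
Proof.
  intros z Hz.
  assert (Ha : ex_series (fun n => Rabs (a n * z ^ n))).
  { apply CV_disk_inside. eapply Rbar_lt_le_trans; [|apply rad_a].
    simpl. rewrite Rabs_pos_eq; lra. }
  assert (He : ex_series (fun n => Rabs (/ INR (fact n) * z ^ n))).
  { apply CV_disk_inside. eapply Rbar_lt_le_trans; [|apply rad_e].
    simpl. rewrite Rabs_pos_eq; lra. }
  assert (H2 := f_ser z). rewrite Rabs_pos_eq in H2 by lra.
  specialize (H2 ltac:(lra)).
  assert (H4 := proj1 (is_pseries_R _ _ _) (is_exp_Reals z)).
  assert (H5 := is_series_mult _ _ _ _ H2 H4 Ha He).
  assert (H3 := is_series_ind1 z).
  assert (H := is_series_minus _ _ _ _ (is_series_minus _ _ _ _ H5 H2) H3).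
  match type of H with is_series _ ?l => replace l with 0 in H end.
  - revert H. apply is_series_ext. intros n. unfold plus, opp, ind; simpl.
    assert (E : sum_f_R0 (fun k : nat => a k * z ^ k * (/ INR (fact (n - k)) * z ^ (n - k))) n
      = sum_f_R0 (fun k : nat => a k * / INR (fact (n - k))) n * z ^ n).
    { rewrite (Rmult_comm _ (z ^ n)), scal_sum. apply sum_eq. intros i Hi.
      replace (z ^ n) with (z ^ (i + (n - i))) by (f_equal; lia). rewrite pow_add. ring. }
    rewrite E. ring.
  - unfold plus, opp; simpl.
    assert (He1 := exp_gt1 z ltac:(lra)). field. lra.
Qed.



Lemma rec0 n : sum_f_R0 (fun k => a k * / INR (fact (n - k))) n - a n - ind n = 0.
Proof. apply (uniq n _ rec_hyp). Qed.

Lemma odd0 n : a n * (-1) ^ n - a n - ind n = 0.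
Proof. apply (uniq n _ odd_hyp). Qed.

Lemma a0 : a O = 1.
Proof. assert (H := rec0 1). unfold ind in H. simpl in H. lra. Qed.

Lemma a1 : a 1%nat = -1/2.
Proof. assert (H := rec0 2). assert (H0 := a0). unfold ind in H. simpl in H. lra. Qed.

Lemma arec : forall j, sum_f_R0 (fun k => a k * / INR (fact (S (S j) - k))) j + a (S j) = 0.
Proof.
  intros j. assert (H := rec0 (S (S j))). unfold ind in H. simpl Nat.eqb in H.
  rewrite !tech5 in H. replace (S (S j) - S j)%nat with 1%nat in H by lia.
  replace (S (S j) - S (S j))%nat with 0%nat in H by lia. change (INR (fact 1)) with 1 in H. change (INR (fact 0)) with 1 in H. rewrite Rinv_1 in H. lra.
Qed.

End Bern.

Theorem corollary9 (B : nat -> R) (HB : is_bernoulli_seq B) (n : nat) (hn : (2 <= n)%nat) :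
  B n = (-1) ^ n * q (n - 1) 1 * INR (fact n).
Proof.
  destruct n as [|[|m]]; try lia.
  replace (S (S m) - 1)%nat with (S m) by lia.
  rewrite (q1 (a B) (a0 B HB) (a1 B HB) (arec B HB) m).
  assert (H := odd0 B HB (S (S m))). unfold ind in H. simpl Nat.eqb in H.
  assert (Hf := INR_fact_neq_0 (S (S m))).
  unfold a in *. 
  replace ((-1) ^ S (S m) * (B (S (S m)) / INR (fact (S (S m)))))
    with (B (S (S m)) / INR (fact (S (S m))) * (-1) ^ S (S m)) by ring.
  replace (B (S (S m)) / INR (fact (S (S m))) * (-1) ^ S (S m)) with (B (S (S m)) / INR (fact (S (S m)))) by lra.
  field. auto.
Qed.
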